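(* Let $\alpha\in(\pi/8,3\pi/8)$ with $\alpha/\pi\notin\mathbb{Q}$, $\beta=\alpha-\pi/2$, $\rho=0.01$, $A_1=\rho R(\alpha)$, $A_2=\rho R(\beta)$ where $R(\theta)=\begin{bmatrix}\cos\theta&-\sin\theta\\ \sin\theta&\cos\theta\end{bmatrix}$, and $c(x)=x_1^2+2x_2^2$ for $x=[x_1,x_2]^\top\in\mathbb{R}^2$. Then the worst-case value function $J^\circ$ of $\{A_1,A_2\}$ with cost $c$ is non-differentiable on a dense subset of $\mathbb{R}^2$.
   Context: For the switched linear system $\xi(t+1)=A_{\sigma(t)}\xi(t)$ with switching signal $\sigma:\mathbb{N}\to\{1,2\}$, $\xi(t,x,\sigma)$ denotes the solution with $\xi(0)=x$, and $J^\circ(x)=\sup_\sigma\sum_{t=0}^\infty c(\xi(t,x,\sigma))$. *)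

(* Defs.v *)
From HB Require Import structures.
From mathcomp Require Import all_boot all_order all_algebra.
From mathcomp Require Import all_classical all_reals all_analysis.
Set Implicit Arguments. Unset Strict Implicit. Unset Printing Implicit Defensive.
Import Order.TTheory GRing.Theory Num.Theory.
Import numFieldNormedType.Exports.
Local Open Scope classical_set_scope.
Local Open Scope ring_scope.

Definition rot (R : realType) (th : R) : 'M[R]_2 :=
  \matrix_(i < 2, j < 2)
    if (i == 0 :> nat) && (j == 0 :> nat) then cos th
    else if (i == 0 :> nat) then - sin th
    else if (j == 0 :> nat) then sin th
    else cos th.

(* Solution xi(t, x, sigma) of xi(t+1) = A_{sigma(t)} xi(t), xi(0) = x.
   Modes {1,2} are indexed by 'I_2 = {0,1}. *)
Fixpoint traj (R : realType) (A : 'I_2 -> 'M[R]_2) (sigma : nat -> 'I_2)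
  (x : 'cV[R]_2) (t : nat) : 'cV[R]_2 :=
  match t with
  | 0 => x
  | t'.+1 => A (sigma t') *m traj A sigma x t'
  end.

Definition Jworst (R : realType) (A : 'I_2 -> 'M[R]_2) (c : 'cV[R]_2 -> R)
  (x : 'cV[R]_2) : R :=
  sup [set v | exists sigma : nat -> 'I_2,
         v = limn (fun n => \sum_(0 <= t < n) c (traj A sigma x t))].

Definition cost (R : realType) (x : 'cV[R]_2) : R :=
  x 0 0 ^+ 2 + 2 * x 1 0 ^+ 2.

Definition Apair (R : realType) (alpha : R) : 'I_2 -> 'M[R]_2 :=
  fun i => if i == 0 then (1 / 100 : R) *: rot alpha
           else (1 / 100 : R) *: rot (alpha - pi / 2).

(* Main.v *)
Require Import Defs.
From HB Require Import structures.
From mathcomp Require Import all_boot all_order all_algebra.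
From mathcomp Require Import all_classical all_reals all_analysis.
From mathcomp Require Import ring lra.
Set Implicit Arguments. Unset Strict Implicit. Unset Printing Implicit Defensive.
Import Order.TTheory GRing.Theory Num.Theory.
Import numFieldNormedType.Exports.
Local Open Scope classical_set_scope.
Local Open Scope ring_scope.

Lemma sum2 (R : realType) (F : 'I_2 -> R) : \sum_(i < 2) F i = F 0 + F 1.
Proof.
rewrite big_ord_recr big_ord_recr big_ord0 /= add0r.
by congr (F _ + F _); apply: val_inj.
Qed.
Definition r0 (R : realType) (th : R) (x : 'cV[R]_2) := cos th * x 0 0 - sin th * x 1 0.
Definition r1 (R : realType) (th : R) (x : 'cV[R]_2) := sin th * x 0 0 + cos th * x 1 0.
Lemma rotv0 (R : realType) (th : R) x : (Defs.rot th *m x) 0 0 = r0 th x.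
Proof. by rewrite !mxE sum2 !mxE /= /r0; ring. Qed.
Lemma rotv1 (R : realType) (th : R) x : (Defs.rot th *m x) 1 0 = r1 th x.
Proof. by rewrite !mxE sum2 !mxE /= /r1; ring. Qed.
Lemma cV2P (R : realType) (x y : 'cV[R]_2) : x 0 0 = y 0 0 -> x 1 0 = y 1 0 -> x = y.
Proof.
move=> h0 h1; apply/matrixP => i j; rewrite (ord1 j).
case: i => [[|[|//]] Hi]; first by rewrite (_ : Ordinal Hi = 0) //; apply: val_inj.
by rewrite (_ : Ordinal Hi = 1) //; apply: val_inj.
Qed.
Lemma rotM (R : realType) (a b : R) (x : 'cV[R]_2) : Defs.rot a *m (Defs.rot b *m x) = Defs.rot (a + b) *m x.
Proof.
apply: cV2P; rewrite ?rotv0 ?rotv1 /r0 /r1 ?rotv0 ?rotv1 /r0 /r1 cosD sinD; ring.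
Qed.
Definition kc (sigma : nat -> 'I_2) (t : nat) : nat := \sum_(s < t) (sigma s != 0%R : nat).
Lemma rot0v (R : realType) (x : 'cV[R]_2) : Defs.rot 0 *m x = x.
Proof. by apply: cV2P; rewrite ?rotv0 ?rotv1 /r0 /r1 cos0 sin0; ring. Qed.
Lemma trajE (R : realType) (alpha : R) sigma x t :
  traj (Apair alpha) sigma x t =
  (1/100 : R) ^+ t *: (Defs.rot (t%:R * alpha - (kc sigma t)%:R * (pi / 2)) *m x).
Proof.
elim: t => [|t IH] /=.
  by rewrite /kc big_ord0 !mul0r subr0 rot0v expr0 scale1r.
rewrite IH /kc big_ord_recr /= -/(kc sigma t) /Apair.
have E : forall (a b : R) (A : 'M[R]_2) (B : 'cV[R]_2), (a *: A) *m (b *: B) = (a * b) *: (A *m B).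
  by move=> a b A B; rewrite -scalemxAl -scalemxAr scalerA.
case: ifP => H; rewrite E rotM -exprS; congr (_ *: (Defs.rot _ *m x));
  rewrite /= ?addn0 ?natrD ?mulrS; ring.
Qed.
Lemma costZ (R : realType) (c : R) (v : 'cV[R]_2) : cost (c *: v) = c ^+ 2 * cost v.
Proof. by rewrite /cost !mxE; ring. Qed.
Definition C2 (R : realType) (b : bool) (th : R) (x : 'cV[R]_2) :=
  if b then r1 th x ^+ 2 + 2 * r0 th x ^+ 2 else r0 th x ^+ 2 + 2 * r1 th x ^+ 2.
Lemma r0B (R : realType) (th : R) x : r0 (th - pi / 2) x = r1 th x.
Proof. by rewrite /r0 /r1 cosBpihalf sinBpihalf; ring. Qed.
Lemma r1B (R : realType) (th : R) x : r1 (th - pi / 2) x = - r0 th x.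
Proof. by rewrite /r0 /r1 cosBpihalf sinBpihalf; ring. Qed.
Lemma par_rot (R : realType) (th : R) (k : nat) x :
  r0 (th - k%:R * (pi / 2)) x ^+ 2 = (if odd k then r1 th x else r0 th x) ^+ 2 /\
  r1 (th - k%:R * (pi / 2)) x ^+ 2 = (if odd k then r0 th x else r1 th x) ^+ 2.
Proof.
elim: k => [|k [IH0 IH1]]; first by rewrite mul0r subr0.
have -> : th - k.+1%:R * (pi / 2) = (th - k%:R * (pi / 2)) - pi / 2.
  by rewrite -addn1 natrD; ring.
rewrite r0B r1B sqrrN IH0 IH1 /=; by case: (odd k).
Qed.
Lemma cost_rot (R : realType) (th : R) (k : nat) x :
  cost (Defs.rot (th - k%:R * (pi / 2)) *m x) = C2 (odd k) th x.
Proof.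
rewrite /cost rotv0 rotv1; have [-> ->] := par_rot th k x.
by rewrite /C2; case: (odd k).
Qed.
Lemma cost_traj (R : realType) (alpha : R) sigma x t :
  cost (traj (Apair alpha) sigma x t) =
  (1/100 : R) ^+ (2 * t) * C2 (odd (kc sigma t)) (t%:R * alpha) x.
Proof. by rewrite trajE costZ cost_rot -exprM mulnC. Qed.
Definition N2 (R : realType) (x : 'cV[R]_2) := x 0 0 ^+ 2 + x 1 0 ^+ 2.
Lemma rN (R : realType) (th : R) x : r0 th x ^+ 2 + r1 th x ^+ 2 = N2 x.
Proof.
transitivity ((cos th ^+ 2 + sin th ^+ 2) * N2 x); first by rewrite /r0 /r1 /N2; ring.
by rewrite cos2Dsin2 mul1r.
Qed.
Definition Mt (R : realType) (th : R) (x : 'cV[R]_2) :=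
  r0 th x ^+ 2 + r1 th x ^+ 2 + Num.max (r0 th x ^+ 2) (r1 th x ^+ 2).
Definition G (R : realType) (alpha : R) (x : 'cV[R]_2) (t : nat) :=
  if t is 0 then cost x else (1/100 : R) ^+ (2 * t) * Mt (t%:R * alpha) x.
Lemma C2_le (R : realType) b (th : R) x : C2 b th x <= Mt th x.
Proof.
rewrite /C2 /Mt; case: b.
  have : r0 th x ^+ 2 <= Num.max (r0 th x ^+ 2) (r1 th x ^+ 2) by rewrite le_max lexx.
  lra.
have : r1 th x ^+ 2 <= Num.max (r0 th x ^+ 2) (r1 th x ^+ 2) by rewrite le_max lexx orbT.
lra.
Qed.
Lemma G_ge0 (R : realType) (alpha : R) x t : 0 <= G alpha x t.
Proof.
case: t => [|t] /=.
  by rewrite /cost; have := sqr_ge0 (x 0 0); have := sqr_ge0 (x 1 0); lra.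
apply: mulr_ge0; first by apply: exprn_ge0.
rewrite /Mt; apply: addr_ge0; first by apply: addr_ge0; apply: sqr_ge0.
by rewrite le_max sqr_ge0.
Qed.
Lemma cost_le_G (R : realType) (alpha : R) sigma x t :
  cost (traj (Apair alpha) sigma x t) <= G alpha x t.
Proof.
case: t => [|t] //=; rewrite -/(traj (Apair alpha) sigma x t.+1) cost_traj.
by apply: ler_wpM2l; [apply: exprn_ge0 | apply: C2_le].
Qed.
Definition popt (R : realType) (alpha : R) (x : 'cV[R]_2) (t : nat) : bool :=
  (t != 0)%N && (r1 (t%:R * alpha) x ^+ 2 < r0 (t%:R * alpha) x ^+ 2).
Definition sopt (R : realType) (alpha : R) (x : 'cV[R]_2) (t : nat) : 'I_2 :=
  if popt alpha x t.+1 != popt alpha x t then 1%R else 0%R.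
Lemma odd_kc (R : realType) (alpha : R) x t : odd (kc (sopt alpha x) t) = popt alpha x t.
Proof.
elim: t => [|t IH]; first by rewrite /kc big_ord0.
rewrite /kc big_ord_recr /= -/(kc _ t) oddD IH /sopt.
by case: (popt alpha x t.+1); case: (popt alpha x t).
Qed.
Lemma cost_opt (R : realType) (alpha : R) x t :
  cost (traj (Apair alpha) (sopt alpha x) x t) = G alpha x t.
Proof.
case: t => [|t] //=; rewrite -/(traj (Apair alpha) _ x t.+1) cost_traj odd_kc.
congr (_ * _); rewrite /C2 /Mt /popt /=.
by case: ltP => H; ring.
Qed.
Lemma G_bound (R : realType) (alpha : R) x t : G alpha x t <= 2 * N2 x * (1/2) ^+ t.
Proof.
case: t => [|t] /=.
  by rewrite expr0 mulr1 /cost /N2; have := sqr_ge0 (x 0 0); lra.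
have hM : Mt (t.+1%:R * alpha) x <= 2 * N2 x.
  rewrite /Mt rN; have := rN (t.+1%:R * alpha) x.
  have := sqr_ge0 (r0 (t.+1%:R * alpha) x); have := sqr_ge0 (r1 (t.+1%:R * alpha) x).
  case: (leP (r0 (t.+1%:R * alpha) x ^+ 2) (r1 (t.+1%:R * alpha) x ^+ 2)); lra.
have hr : (1/100 : R) ^+ (2 * t.+1) <= (1/2) ^+ t.+1.
  rewrite exprM; apply: lerXn2r; rewrite ?nnegrE //; lra.
have hM0 : 0 <= Mt (t.+1%:R * alpha) x.
  rewrite /Mt; apply: addr_ge0; first by apply: addr_ge0; apply: sqr_ge0.
  by rewrite le_max sqr_ge0.
have h0 : 0 <= (1/2 : R) ^+ t.+1 by apply: exprn_ge0; lra.
rewrite [X in _ <= X]mulrC; apply: (le_trans (y := (1/2) ^+ t.+1 * Mt (t.+1%:R * alpha) x)).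
  by apply: ler_wpM2r.
by apply: ler_wpM2l.
Qed.
Lemma geo (R : realType) n : \sum_(0 <= t < n) (1/2 : R) ^+ t = 2 - 2 * (1/2) ^+ n.
Proof.
elim: n => [|n IH]; first by rewrite big_geq // expr0; lra.
by rewrite big_nat_recr //= IH exprS; lra.
Qed.
Definition Fn (R : realType) (alpha : R) x n := \sum_(0 <= t < n) G alpha x t.
Lemma Fn_bound (R : realType) (alpha : R) x n : Fn alpha x n <= 4 * N2 x.
Proof.
rewrite /Fn; apply: (le_trans (y := \sum_(0 <= t < n) (2 * N2 x * (1/2) ^+ t))).
  by apply: ler_sum => t _; apply: G_bound.
rewrite -mulr_sumr geo.
have hN : 0 <= N2 x by rewrite /N2; apply: addr_ge0; apply: sqr_ge0.
have : 0 <= (1/2 : R) ^+ n by apply: exprn_ge0; lra.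
nra.
Qed.
Lemma Fn_nd (R : realType) (alpha : R) x : nondecreasing_seq (Fn alpha x).
Proof.
by move=> m n mn; apply: (@nondecreasing_series R (G alpha x) xpredT 0) => // k _ _; apply: G_ge0.
Qed.
Lemma Fn_cvg (R : realType) (alpha : R) x : cvgn (Fn alpha x).
Proof.
apply: nondecreasing_is_cvgn; first exact: Fn_nd.
by exists (4 * N2 x) => _ [n _ <-]; apply: Fn_bound.
Qed.
Definition F (R : realType) (alpha : R) x := limn (Fn alpha x).
Lemma cost_ge0 (R : realType) (v : 'cV[R]_2) : 0 <= cost v.
Proof. by rewrite /cost; have := sqr_ge0 (v 0 0); have := sqr_ge0 (v 1 0); lra. Qed.
Lemma Jeq (R : realType) (alpha : R) x : Jworst (Apair alpha) (@cost R) x = F alpha x.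
Proof.
rewrite /Jworst.
set E := [set v | _].
have ub : forall v, E v -> v <= F alpha x.
  move=> _ [sigma ->].
  set S := (fun n => _).
  have nd : nondecreasing_seq S.
    move=> m n mn; apply: (@nondecreasing_series R (fun t => cost (traj (Apair alpha) sigma x t)) xpredT 0) => // k _ _.
    exact: cost_ge0.
  have SF : forall n, S n <= Fn alpha x n.
    by move=> n; apply: ler_sum => t _; apply: cost_le_G.
  have cS : cvgn S.
    apply: nondecreasing_is_cvgn => //.
    by exists (4 * N2 x) => _ [n _ <-]; apply: le_trans (SF n) (Fn_bound _ _ _).
  by apply: ler_lim => //; [exact: Fn_cvg | apply: nearW].
have FE : E (F alpha x).
  exists (sopt alpha x); rewrite /F /Fn; congr (limn _); apply: funext => n.
  by apply: eq_bigr => t _; rewrite cost_opt.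
apply/eqP; rewrite eq_le; apply/andP; split.
  by apply: ge_sup; [exists (F alpha x) | exact: ub].
apply: (sup_upper_bound (E := E)) => //; split; first by exists (F alpha x).
by exists (F alpha x).
Qed.
Lemma maxconv (R : realType) (a b c d : R) :
  2 * Num.max (a ^+ 2) (b ^+ 2) <=
  Num.max ((a + c) ^+ 2) ((b + d) ^+ 2) + Num.max ((a - c) ^+ 2) ((b - d) ^+ 2).
Proof.
have h1 : (a + c) ^+ 2 <= Num.max ((a + c) ^+ 2) ((b + d) ^+ 2) by rewrite le_max lexx.
have h2 : (b + d) ^+ 2 <= Num.max ((a + c) ^+ 2) ((b + d) ^+ 2) by rewrite le_max lexx orbT.
have h3 : (a - c) ^+ 2 <= Num.max ((a - c) ^+ 2) ((b - d) ^+ 2) by rewrite le_max lexx.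
have h4 : (b - d) ^+ 2 <= Num.max ((a - c) ^+ 2) ((b - d) ^+ 2) by rewrite le_max lexx orbT.
have e1 : (a + c) ^+ 2 + (a - c) ^+ 2 = 2 * a ^+ 2 + 2 * c ^+ 2 by ring.
have e2 : (b + d) ^+ 2 + (b - d) ^+ 2 = 2 * b ^+ 2 + 2 * d ^+ 2 by ring.
have := sqr_ge0 c; have := sqr_ge0 d.
case: (leP (a ^+ 2) (b ^+ 2)) => _; lra.
Qed.
Lemma maxkink (R : realType) (a b c d : R) : a ^+ 2 = b ^+ 2 ->
  2 * Num.max (a ^+ 2) (b ^+ 2) + 2 * `|a * c - b * d| <=
  Num.max ((a + c) ^+ 2) ((b + d) ^+ 2) + Num.max ((a - c) ^+ 2) ((b - d) ^+ 2).
Proof.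
move=> ab.
have h1 : (a + c) ^+ 2 <= Num.max ((a + c) ^+ 2) ((b + d) ^+ 2) by rewrite le_max lexx.
have h2 : (b + d) ^+ 2 <= Num.max ((a + c) ^+ 2) ((b + d) ^+ 2) by rewrite le_max lexx orbT.
have h3 : (a - c) ^+ 2 <= Num.max ((a - c) ^+ 2) ((b - d) ^+ 2) by rewrite le_max lexx.
have h4 : (b - d) ^+ 2 <= Num.max ((a - c) ^+ 2) ((b - d) ^+ 2) by rewrite le_max lexx orbT.
have e1 : (a + c) ^+ 2 + (b - d) ^+ 2 = a ^+ 2 + b ^+ 2 + 2 * (a * c - b * d) + (c ^+ 2 + d ^+ 2) by ring.
have e2 : (b + d) ^+ 2 + (a - c) ^+ 2 = a ^+ 2 + b ^+ 2 - 2 * (a * c - b * d) + (c ^+ 2 + d ^+ 2) by ring.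
have := sqr_ge0 c; have := sqr_ge0 d.
have -> : Num.max (a ^+ 2) (b ^+ 2) = a ^+ 2 by rewrite ab maxxx.
case: (lerP 0 (a * c - b * d)) => s.
  by rewrite ger0_norm //; lra.
by rewrite ltr0_norm //; lra.
Qed.
Lemma r0P (R : realType) (th h : R) (x v : 'cV[R]_2) : r0 th (x + h *: v) = r0 th x + h * r0 th v.
Proof. by rewrite /r0 !mxE; ring. Qed.
Lemma r1P (R : realType) (th h : R) (x v : 'cV[R]_2) : r1 th (x + h *: v) = r1 th x + h * r1 th v.
Proof. by rewrite /r1 !mxE; ring. Qed.
Lemma r0M (R : realType) (th h : R) (x v : 'cV[R]_2) : r0 th (x - h *: v) = r0 th x - h * r0 th v.
Proof. by rewrite /r0 !mxE; ring. Qed.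
Lemma r1M (R : realType) (th h : R) (x v : 'cV[R]_2) : r1 th (x - h *: v) = r1 th x - h * r1 th v.
Proof. by rewrite /r1 !mxE; ring. Qed.
Definition G2 (R : realType) (alpha h : R) (x v : 'cV[R]_2) t :=
  G alpha (x + h *: v) t + G alpha (x - h *: v) t - 2 * G alpha x t.
Lemma G2_ge0 (R : realType) (alpha h : R) x v t : 0 <= G2 alpha h x v t.
Proof.
rewrite /G2; case: t => [|t] /=.
  rewrite /cost !mxE.
  have -> : (x 0 0 + h * v 0 0) ^+ 2 + 2 * (x 1 0 + h * v 1 0) ^+ 2 +
    ((x 0 0 - h * v 0 0) ^+ 2 + 2 * (x 1 0 - h * v 1 0) ^+ 2) -
    2 * (x 0 0 ^+ 2 + 2 * x 1 0 ^+ 2) = 2 * ((h * v 0 0) ^+ 2 + 2 * (h * v 1 0) ^+ 2) by ring.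
  by have := sqr_ge0 (h * v 0 0); have := sqr_ge0 (h * v 1 0); lra.
set th := t.+1%:R * alpha.
rewrite /Mt !r0P !r1P !r0M !r1M.
set a := r0 th x; set b := r1 th x; set c := h * r0 th v; set d := h * r1 th v.
have := maxconv a b c d.
have -> : (1 / 100) ^+ (2 * t.+1) * ((a + c) ^+ 2 + (b + d) ^+ 2 + Num.max ((a + c) ^+ 2) ((b + d) ^+ 2)) +
  (1 / 100) ^+ (2 * t.+1) * ((a - c) ^+ 2 + (b - d) ^+ 2 + Num.max ((a - c) ^+ 2) ((b - d) ^+ 2)) -
  2 * ((1 / 100) ^+ (2 * t.+1) * (a ^+ 2 + b ^+ 2 + Num.max (a ^+ 2) (b ^+ 2))) =
  (1 / 100) ^+ (2 * t.+1) * (2 * (c ^+ 2 + d ^+ 2) + (Num.max ((a + c) ^+ 2) ((b + d) ^+ 2) + Num.max ((a - c) ^+ 2) ((b - d) ^+ 2) - 2 * Num.max (a ^+ 2) (b ^+ 2))).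
  by ring.
move=> hm; apply: mulr_ge0; first by apply: exprn_ge0.
by have := sqr_ge0 c; have := sqr_ge0 d; lra.
Qed.
Lemma G2_kink (R : realType) (alpha h : R) x v t : (0 < t)%N ->
  r0 (t%:R * alpha) x ^+ 2 = r1 (t%:R * alpha) x ^+ 2 ->
  (1/100 : R) ^+ (2 * t) * (2 * (`|h| * `|r0 (t%:R * alpha) x * r0 (t%:R * alpha) v
                                    - r1 (t%:R * alpha) x * r1 (t%:R * alpha) v|))
  <= G2 alpha h x v t.
Proof.
case: t => [//|t] _ /=; set th := t.+1%:R * alpha => hab.
rewrite /G2 /= /Mt !r0P !r1P !r0M !r1M.
have -> : `|h| * `|r0 th x * r0 th v - r1 th x * r1 th v| =
          `|r0 th x * (h * r0 th v) - r1 th x * (h * r1 th v)|.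
  by rewrite -normrM; congr `|_|; ring.
set a := r0 th x; set b := r1 th x; set c := h * r0 th v; set d := h * r1 th v.
have := maxkink c d hab.
have -> : (1 / 100) ^+ (2 * t.+1) * ((a + c) ^+ 2 + (b + d) ^+ 2 + Num.max ((a + c) ^+ 2) ((b + d) ^+ 2)) +
  (1 / 100) ^+ (2 * t.+1) * ((a - c) ^+ 2 + (b - d) ^+ 2 + Num.max ((a - c) ^+ 2) ((b - d) ^+ 2)) -
  2 * ((1 / 100) ^+ (2 * t.+1) * (a ^+ 2 + b ^+ 2 + Num.max (a ^+ 2) (b ^+ 2))) =
  (1 / 100) ^+ (2 * t.+1) * (2 * (c ^+ 2 + d ^+ 2) + (Num.max ((a + c) ^+ 2) ((b + d) ^+ 2) + Num.max ((a - c) ^+ 2) ((b - d) ^+ 2) - 2 * Num.max (a ^+ 2) (b ^+ 2))).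
  by ring.
move=> hm; apply: ler_wpM2l; first by apply: exprn_ge0.
by have := sqr_ge0 c; have := sqr_ge0 d; lra.
Qed.
Lemma sum_ge_term (R : realType) (g : nat -> R) t0 n : (forall t, 0 <= g t) -> (t0 < n)%N ->
  g t0 <= \sum_(0 <= t < n) g t.
Proof.
move=> g0; elim: n => [//|n IH] hn.
rewrite big_nat_recr //=.
case: (ltngtP t0 n) => h.
- by have := IH h; have := g0 n; lra.
- by move: hn; rewrite ltnS leqNgt h.
- rewrite h; have : 0 <= \sum_(0 <= t < n) g t by apply: sumr_ge0 => t _; apply: g0.
  lra.
Qed.
Lemma F2_ge (R : realType) (alpha h : R) x v t : (0 < t)%N ->
  r0 (t%:R * alpha) x ^+ 2 = r1 (t%:R * alpha) x ^+ 2 ->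
  (1/100 : R) ^+ (2 * t) * (2 * (`|h| * `|r0 (t%:R * alpha) x * r0 (t%:R * alpha) v
                                    - r1 (t%:R * alpha) x * r1 (t%:R * alpha) v|))
  <= F alpha (x + h *: v) + F alpha (x - h *: v) - (F alpha x + F alpha x).
Proof.
move=> t0 hab.
set Dn := fun n => Fn alpha (x + h *: v) n + Fn alpha (x - h *: v) n - (Fn alpha x n + Fn alpha x n).
have cD : Dn @ \oo --> F alpha (x + h *: v) + F alpha (x - h *: v) - (F alpha x + F alpha x).
  apply: cvgB; apply: cvgD; exact: Fn_cvg.
rewrite -(cvg_lim _ cD); last exact: norm_hausdorff.
apply: (limr_ge (f := Dn)); first exact: cvgP cD.
near=> n.
have -> : Dn n = \sum_(0 <= s < n) G2 alpha h x v s.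
  by rewrite /Dn /G2 sumrB big_split /= -mulr_sumr /Fn; ring.
apply: le_trans (G2_kink h v t0 hab) _.
apply: sum_ge_term; first by move=> s; apply: G2_ge0.
by near: n; apply: nbhs_infty_gt.
Unshelve. all: by end_near.
Qed.
Lemma nondiff (R : realType) (alpha : R) x t : (0 < t)%N ->
  r0 (t%:R * alpha) x ^+ 2 = r1 (t%:R * alpha) x ^+ 2 -> 0 < N2 x ->
  ~ differentiable (F alpha) x.
Proof.
move=> t0 hab N0 D.
set th := t%:R * alpha in hab.
pose v : 'cV[R]_2 := \matrix_(i < 2, j < 1)
  (if i == 0 then r0 th x * cos th - r1 th x * sin th else - r0 th x * sin th - r1 th x * cos th).
have hL : r0 th x * r0 th v - r1 th x * r1 th v = N2 x.
  rewrite -(rN th x).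
  set w0 := r0 th x; set w1 := r1 th x.
  rewrite /r0 /r1 /v !mxE /=.
  rewrite -/w0 -/w1.
  transitivity ((cos th ^+ 2 + sin th ^+ 2) * (w0 ^+ 2 + w1 ^+ 2)); first by ring.
  by rewrite cos2Dsin2 mul1r.
have c1 : (fun h : R => h^-1 *: ((F alpha \o shift x) (h *: v) - F alpha x)) @ 0^' --> 'd (F alpha) x v.
  by rewrite -(deriveE v D); exact: (diff_derivable (v := v) D).
have c2 : (fun h : R => h^-1 *: ((F alpha \o shift x) (h *: - v) - F alpha x)) @ 0^' --> 'd (F alpha) x (- v).
  by rewrite -(deriveE (- v) D); exact: (diff_derivable (v := - v) D).
have := cvgD c1 c2.
rewrite linearN addrN => c3.
have c4 := c3 (dnbhs_filter 0).
set K := (1/100 : R) ^+ (2 * t) * (2 * N2 x).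
have K0 : 0 < K by apply: mulr_gt0; [apply: exprn_gt0 | apply: mulr_gt0]; lra.
move/cvgrPdist_lt: c4 => /(_ K K0).
rewrite /dnbhs /within /= => /nbhs_ballP [e e0 He].
have h0 : 0 < e / 2 by move: e0 => /= e0; lra.
have := He (e / 2); set h := e / 2 in h0 *.
have hb : ball 0 e h by rewrite /ball /= sub0r normrN gtr0_norm //; move: e0 => /= e0; rewrite /h; lra.
have hne : h != 0 by rewrite gt_eqF.
move=> /(_ hb hne) /=.
have e1 : h *: v + x = x + h *: v by rewrite addrC.
have e2 : h *: - v + x = x - h *: v by rewrite scalerN addrC.
have sc : forall a b : R, a *: b = a * b by [].
rewrite !fctE; rewrite e1 e2 !sc sub0r normrN.
have FB := F2_ge h v t0 hab.
rewrite -/th hL (gtr0_norm h0) (gtr0_norm N0) in FB.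
set A := F alpha (x + h *: v) - F alpha x.
set B := F alpha (x - h *: v) - F alpha x.
have hAB : F alpha (x + h *: v) + F alpha (x - h *: v) - (F alpha x + F alpha x) = A + B.
  by rewrite /A /B; ring.
rewrite hAB in FB.
have hi : 0 <= h^-1 by rewrite invr_ge0 ltW.
have := ler_wpM2l hi FB.
have -> : h^-1 * ((1 / 100) ^+ (2 * t) * (2 * (h * N2 x))) = K.
  by rewrite /K; field; rewrite gt_eqF.
have := ler_norm (h^-1 * A + h^-1 * B).
have -> : h^-1 * (A + B) = h^-1 * A + h^-1 * B by ring.
lra.
Qed.
Lemma step_lem (R : realType) (e c : R) : 0 < e < 1 ->
  exists k : nat, (0 < k)%N /\ exists n : int, `|k%:R * e - c - n%:~R| < e.
Proof.
move=> /andP [e0 e1].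
have fl := Num.Theory.floor_itv c.
set f := Num.floor c in fl.
set c' := c - f%:~R + 1.
have hc' : 1 <= c' < 2.
  rewrite /c' intrD mulr1z in fl; move: fl => /andP [fl1 fl2]; apply/andP; split; rewrite /c'; lra.
have hq : 1 <= c' / e.
  rewrite ler_pdivlMr //; move: hc' => /andP [h1 h2]; lra.
have hq0 : 0 <= c' / e by lra.
exists (Num.truncn (c' / e)); split; first by rewrite truncn_gt0.
exists (1 - f); rewrite intrB mulr1z /=.
have := truncn_itv hq0; set k := Num.truncn (c' / e) => /andP [k1 k2].
have k1' : k%:R * e <= c' by rewrite -ler_pdivlMr.
have k2' : c' < k.+1%:R * e by rewrite -ltr_pdivrMr.
rewrite -addn1 natrD mulrDl mul1r in k2'.
rewrite /c' in k1' k2'.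
rewrite ltr_norml; apply/andP; split; lra.
Qed.
Definition fr (R : realType) (y : R) := y - (Num.floor y)%:~R.
Lemma fr_itv (R : realType) (y : R) : 0 <= fr y < 1.
Proof.
have := Num.Theory.floor_itv y; rewrite intrD mulr1z /fr => /andP [h1 h2].
apply/andP; split; lra.
Qed.
Lemma pigeon (R : realType) (a d : R) : (forall q : rat, a != ratr q) -> 0 < d ->
  exists t0 : nat, (0 < t0)%N /\ exists m0 : int, 0 < `|t0%:R * a - m0%:~R| < d.
Proof.
move=> irr d0.
set m := Num.truncn (d^-1).
have hM : d^-1 < m.+1%:R by apply: truncnS_gt.
have dM : 1 < d * m.+1%:R.
  by rewrite -ltr_pdivrMl // mulr1.
have M0 : 0 < m.+1%:R :> R by rewrite ltr0n.
have key : forall i j : nat, (i < j)%N ->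
    Num.truncn (m.+1%:R * fr (i%:R * a)) = Num.truncn (m.+1%:R * fr (j%:R * a)) ->
    exists t0 : nat, (0 < t0)%N /\ exists m0 : int, 0 < `|t0%:R * a - m0%:~R| < d.
  move=> i j ij hb.
  exists (j - i)%N; split; first by rewrite subn_gt0.
  exists (Num.floor (j%:R * a) - Num.floor (i%:R * a)).
  have -> : (j - i)%N%:R * a - (Num.floor (j%:R * a) - Num.floor (i%:R * a))%:~R =
            fr (j%:R * a) - fr (i%:R * a).
    by rewrite natrB ?(ltnW ij) // intrB /fr; ring.
  have hi := fr_itv (i%:R * a); have hj := fr_itv (j%:R * a).
  have Mi0 : 0 <= m.+1%:R * fr (i%:R * a) by apply: mulr_ge0; [apply: ltW | case/andP: hi].
  have Mj0 : 0 <= m.+1%:R * fr (j%:R * a) by apply: mulr_ge0; [apply: ltW | case/andP: hj].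
  have := truncn_itv Mi0; have := truncn_itv Mj0; rewrite -hb.
  set b := Num.truncn _ => /andP [bj1 bj2] /andP [bi1 bi2].
  apply/andP; split.
    rewrite normr_gt0 subr_eq0; apply/negP => /eqP E.
    have E2 : (j - i)%N%:R * a = (Num.floor (j%:R * a) - Num.floor (i%:R * a))%:~R.
      apply/eqP; rewrite -subr_eq0; apply/eqP.
      by rewrite natrB ?(ltnW ij) // intrB /fr; move: E; rewrite /fr => E; rewrite -[LHS]addr0; lra.
    have tn0 : (j - i)%N%:R != 0 :> R by rewrite pnatr_eq0 -lt0n subn_gt0.
    move: (irr ((Num.floor (j%:R * a) - Num.floor (i%:R * a))%:~R / (j - i)%N%:R)).
    rewrite fmorph_div rmorph_int rmorph_nat -E2 mulrC mulrA mulVf // mul1r eqxx //.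
  rewrite -(ltr_pM2r M0); apply: (lt_trans (y := 1)); last by [].
  have -> : `|fr (j%:R * a) - fr (i%:R * a)| * m.+1%:R =
            `|m.+1%:R * fr (j%:R * a) - m.+1%:R * fr (i%:R * a)|.
    by rewrite -[in LHS](gtr0_norm M0) -normrM; congr `|_|; ring.
  by rewrite ltr_norml; apply/andP; split; lra.
set f : 'I_m.+2 -> 'I_m.+1 := fun i => inord (Num.truncn (m.+1%:R * fr (i%:R * a))).
have bnd : forall i : nat, (Num.truncn (m.+1%:R * fr (i%:R * a)) < m.+1)%N.
  move=> i; have hi := fr_itv (i%:R * a).
  rewrite truncn_lt_nat; last by apply: mulr_ge0; [apply: ltW | case/andP: hi].
  by rewrite -[X in _ < X]mulr1 ltr_pM2l //; case/andP: hi.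
have : ~~ injectiveb f.
  apply/negP => /injectiveP inj; have := leq_card f inj; rewrite !card_ord ltnn //.
case/injectivePn => i [j] ij fij.
have hb : Num.truncn (m.+1%:R * fr (i%:R * a)) = Num.truncn (m.+1%:R * fr (j%:R * a)).
  by move: (congr1 val fij); rewrite /f /= !inordK.
case: (ltngtP i j) => h.
- exact: key h hb.
- exact: key h (esym hb).
- by move: ij; rewrite -val_eqE /= h eqxx.
Qed.
Lemma dirichlet (R : realType) (a : R) : (forall q : rat, a != ratr q) ->
  forall c d, 0 < d -> exists t : nat, (0 < t)%N /\ exists k : int, `|t%:R * a - c - k%:~R| < d.
Proof.
move=> irr c d d0.
have d10 : 0 < Num.min d 1 by rewrite lt_min d0 ltr01.
have [t0 [t00 [m0 /andP [e0 e1]]]] := pigeon irr d10.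
move: e1; rewrite lt_min => /andP [ed e1].
set eps := t0%:R * a - m0%:~R in e0 ed e1.
have cast : forall k : nat, (Posz k)%:~R = k%:R :> R by move=> k; rewrite -pmulrn.
case: (ltrP 0 eps) => hs.
- have [k [k0 [n hn]]] : exists k : nat, (0 < k)%N /\ exists n : int, `|k%:R * eps - c - n%:~R| < eps.
    by apply: step_lem; rewrite hs -(gtr0_norm hs).
  exists (k * t0)%N; split; first by rewrite muln_gt0 k0.
  exists (n + Posz k * m0); rewrite intrD intrM cast natrM.
  have -> : k%:R * t0%:R * a - c - (n%:~R + k%:R * m0%:~R) = k%:R * eps - c - n%:~R by rewrite /eps; ring.
  by apply: lt_trans hn _; rewrite -(gtr0_norm hs).
- have hs' : eps < 0 by rewrite lt_neqAle hs andbT; apply/negP => /eqP E; move: e0; rewrite E normr0 ltxx.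
  have [k [k0 [n hn]]] : exists k : nat, (0 < k)%N /\ exists n : int, `|k%:R * (- eps) - (- c) - n%:~R| < - eps.
    by apply: step_lem; rewrite oppr_gt0 hs' /= -(ltr0_norm hs').
  exists (k * t0)%N; split; first by rewrite muln_gt0 k0.
  exists (Posz k * m0 - n); rewrite intrB intrM cast natrM.
  have -> : k%:R * t0%:R * a - c - (k%:R * m0%:~R - n%:~R) = - (k%:R * (- eps) - (- c) - n%:~R) by rewrite /eps; ring.
  by rewrite normrN; apply: lt_trans hn _; rewrite -(ltr0_norm hs').
Qed.
Lemma zero_psi (R : realType) (y : 'cV[R]_2) : exists psi : R, r0 psi y = r1 psi y.
Proof.
rewrite /r0 /r1; set a := y 0 0; set b := y 1 0.
have [ab|ab] := eqVneq (a + b) 0.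
  exists (pi / 2); rewrite cos_pihalf sin_pihalf; lra.
set u := (a - b) / (a + b).
exists (atan u).
have c0 : 0 < cos (atan u) by apply: cos_gt0_pihalf; rewrite atan_gtNpi2 atan_ltpi2.
have hs : sin (atan u) = u * cos (atan u).
  by have := atanK u; rewrite /tan => t; rewrite -[X in _ = X * _]t divfK // gt_eqF.
rewrite hs /u; field; exact: ab.
Qed.
Lemma per_int (R : realType) (f : R -> R) (T : R) : periodic f T ->
  forall (k : int) u, f (u + k%:~R * T) = f u.
Proof.
move=> hp k u; case: k => n.
  by rewrite -pmulrn mulr_natl (periodicn hp).
rewrite NegzE mulrNz -pmulrn mulNr mulr_natl.
by have := periodicn hp n.+1 (u - T *+ n.+1); rewrite subrK => <-.
Qed.
Lemma small (R : realType) (A B p q eta e : R) : `|p| < eta -> `|q| < eta ->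
  eta * (`|A| + `|B| + 1) = e -> `|p * A + q * B| < e.
Proof.
move=> hp hq he.
have hA := normr_ge0 A; have hB := normr_ge0 B.
apply: le_lt_trans (ler_normD _ _) _; rewrite !normrM.
have h1 : `|p| * `|A| <= eta * `|A| by apply: ler_wpM2r => //; apply: ltW.
have h2 : `|q| * `|B| <= eta * `|B| by apply: ler_wpM2r => //; apply: ltW.
have e0 : 0 < eta by apply: le_lt_trans hp.
rewrite -he; lra.
Qed.
Lemma exist_nz (R : realType) (O : set 'cV[R]_2) y : open O -> O y ->
  exists y1, O y1 /\ 0 < N2 y1.
Proof.
move=> Oo Oy.
case: (ltrP 0 (N2 y)) => hN; first by exists y.
have y0 : y 0 0 = 0 /\ y 1 0 = 0.
  move: hN; rewrite /N2 => hN.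
  have := sqr_ge0 (y 0 0); have := sqr_ge0 (y 1 0) => h1 h0.
  have e0 : y 0 0 ^+ 2 = 0 by lra.
  have e1 : y 1 0 ^+ 2 = 0 by lra.
  by move: e0 e1 => /eqP; rewrite sqrf_eq0 => /eqP -> /eqP; rewrite sqrf_eq0 => /eqP ->.
have /nbhs_ballP [e e0 He] := open_nbhs_nbhs (conj Oo Oy).
move: e0 => /= e0.
exists (const_mx (e / 2)); split.
  apply: He; split => // i j; rewrite /ball /= mxE.
  have -> : y i j = 0.
    rewrite (ord1 j); case: i => [[|[|//]] Hi].
      by rewrite (_ : Ordinal Hi = 0) //; [apply: y0.1 | apply: val_inj].
    by rewrite (_ : Ordinal Hi = 1) //; [apply: y0.2 | apply: val_inj].
  rewrite sub0r normrN gtr0_norm; lra.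
rewrite /N2 !mxE.
have : 0 < (e / 2) ^+ 2 by apply: exprn_gt0; lra.
have := sqr_ge0 (e / 2); lra.
Qed.
Lemma alg1 (R : realType) (P psi kk T a : R) : 0 < P ->
  0 - (psi + kk * (P *+ 2) - T * a) = (P *+ 2) * (T * (a / (P *+ 2)) - psi / (P *+ 2) - kk).
Proof.
move=> P0; have h1 : P + P != 0 by rewrite gt_eqF //; lra.
have h2 : P != 0 by rewrite gt_eqF.
by rewrite mulr2n; field; rewrite ?h1 ?h2.
Qed.
Lemma alg2 (R : realType) (P a : R) : 0 < P -> a / P = a / (P *+ 2) * 2%:R.
Proof.
move=> P0; have h1 : P + P != 0 by rewrite gt_eqF //; lra.
have h2 : P != 0 by rewrite gt_eqF.
by rewrite mulr2n; field; rewrite ?h1 ?h2.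
Qed.
Unset Implicit Arguments.

Theorem corollary4 (R : realType) (alpha : R) :
  pi / 8 < alpha < 3 * pi / 8 ->
  ~ (exists q : rat, alpha / pi = ratr q) ->
  dense [set x : 'cV[R]_2 | ~ differentiable (Jworst (Apair alpha) (@cost R)) x].
Proof.
move=> _ Hirr.
have JF : Jworst (Apair alpha) (@cost R) = F alpha by apply: funext => z; apply: Jeq.
rewrite JF.
have pip := @pi_gt0 R.
have pi0 : 0 < pi *+ 2 :> R by rewrite mulr2n; lra.
have pin0 : pi *+ 2 != 0 :> R by rewrite gt_eqF.
have irr : forall q : rat, alpha / (pi *+ 2) != ratr q.
  move=> q; apply/negP => /eqP E; apply: Hirr; exists (q * 2%:R).
  have -> : ratr (q * 2%:R) = ratr q * 2%:R :> R by rewrite rmorphM rmorph_nat.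
  by rewrite -E; apply: alg2.
move=> O [y Oy] Oo.
have [y1 [Oy1 N1]] := exist_nz Oo Oy.
have /nbhs_ballP [e1 e10 He1] := open_nbhs_nbhs (conj Oo Oy1).
move: e10 => /= e10.
have [psi hpsi] := zero_psi y1.
have den0 : 0 < `|y1 0 0| + `|y1 1 0| + 1.
  by have := normr_ge0 (y1 0 0); have := normr_ge0 (y1 1 0); lra.
set eta := e1 / (`|y1 0 0| + `|y1 1 0| + 1).
have eta0 : 0 < eta by apply: divr_gt0.
have etaE : eta * (`|y1 0 0| + `|y1 1 0| + 1) = e1 by rewrite /eta divfK // gt_eqF.
have Pc := (cvgrPdist_lt _ _).1 (@continuous_cos R 0) eta eta0.
have Ps := (cvgrPdist_lt _ _).1 (@continuous_sin R 0) eta eta0.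
have PI : nbhs (0 : R) (fun th => `|cos 0 - cos th| < eta /\ `|sin 0 - sin th| < eta).
  exact: (filterI (Pc (nbhs_pfilter 0)) (Ps (nbhs_pfilter 0))).
move: PI => /nbhs_ballP [dl dl0 Hdl].
move: dl0 => /= dl0.
have [t [t0 [k hk]]] := dirichlet irr (psi / (pi *+ 2)) (divr_gt0 dl0 pi0).
set th := psi + k%:~R * (pi *+ 2) - t%:R * alpha.
have hth : `|0 - th| < dl.
  have -> : 0 - th = (pi *+ 2) * (t%:R * (alpha / (pi *+ 2)) - psi / (pi *+ 2) - k%:~R).
    by rewrite /th; apply: alg1.
  by rewrite normrM (gtr0_norm pi0) mulrC -ltr_pdivlMr.
have [hc hs] := Hdl th hth.
rewrite /= cos0 sin0 sub0r normrN in hc hs.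
set x := Defs.rot th *m y1.
have hang : t%:R * alpha + th = psi + k%:~R * (pi *+ 2) by rewrite /th; ring.
have hr0 : r0 (t%:R * alpha) x = r0 psi y1.
  by rewrite /x -rotv0 rotM rotv0 hang /r0 (per_int (@cosD2pi R)) (per_int (@sinD2pi R)).
have hr1 : r1 (t%:R * alpha) x = r1 psi y1.
  by rewrite /x -rotv1 rotM rotv1 hang /r1 (per_int (@cosD2pi R)) (per_int (@sinD2pi R)).
have hN : N2 x = N2 y1 by rewrite /N2 /x rotv0 rotv1 rN.
exists x; split.
  apply: He1; split => // i j; rewrite (ord1 j); case: i => [[|[|//]] Hi].
    rewrite (_ : Ordinal Hi = 0); last by apply: val_inj.
    rewrite /ball /= /x rotv0 /r0.
    have -> : y1 0 0 - (cos th * y1 0 0 - sin th * y1 1 0) = (1 - cos th) * y1 0 0 + sin th * y1 1 0 by ring.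
    exact: (small hc hs etaE).
  rewrite (_ : Ordinal Hi = 1); last by apply: val_inj.
  rewrite /ball /= /x rotv1 /r1.
  have -> : y1 1 0 - (sin th * y1 0 0 + cos th * y1 1 0) = (- sin th) * y1 0 0 + (1 - cos th) * y1 1 0 by ring.
  by apply: (small _ hc etaE); rewrite normrN.
apply: (nondiff (t := t)) => //; first by rewrite hr0 hr1 hpsi.
by rewrite hN.
Qed.
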